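(* Let $\mathcal{R}$ be a right amenable cell space with finite stabiliser $G_0$, let $(\mathcal{R},Q,N,\delta)$ be a semi-cellular automaton with $Q$ finite and $N$ finite, whose global transition function is $\Delta$, and let $\mathcal{F}=(F_i)_{i\in I}$ be a right Følner net in $\mathcal{R}$. Suppose $\delta$ is $\bullet$-invariant, $Q$ contains at least two elements, and $\Delta$ is not pre-injective. Then $\mathrm{h}_{\mathcal{F}}(\Delta(Q^M))<\log|Q|$.
   Context: A cell space $\mathcal{R}$ consists of a group $G$ acting transitively on the left on a nonempty set $M$ via $\triangleright$, a point $m_0\in M$ and a family $(g_{m_0,m})_{m\in M}$ in $G$ with $g_{m_0,m}\triangleright m_0=m$. $G_0$ is the stabiliser of $m_0$, $G/G_0$ the set of left cosets, with $G$ acting by $g\cdot hG_0=ghG_0$. The right semi-action $\triangleleft\colon M\times G/G_0\to M$ is $m\triangleleft gG_0=g_{m_0,m}g\triangleright m_0$. $\mathcal{R}$ is right amenable if there is a finitely additive probability measure $\mu$ on the power set of $M$ such that $\mu(\{a\triangleleft\mathfrak{g}:a\in A\})=\mu(A)$ whenever $\mathfrak{g}\in G/G_0$, $A\subseteq M$ and $m\mapsto m\triangleleft\mathfrak{g}$ is injective on $A$. A right Følner net in $\mathcal{R}$ is a net $(F_i)_{i\in I}$ (over a directed set) of nonempty finite subsets of $M$ with $\lim_{i}\frac{|F_i\setminus\{m: m\triangleleft\mathfrak{g}\in F_i\}|}{|F_i|}=0$ for every $\mathfrak{g}\in G/G_0$. A semi-cellular automaton is $(\mathcal{R},Q,N,\delta)$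 with $Q$ a set, $N\subseteq G/G_0$ with $G_0\cdot N\subseteq N$, $\delta\colon Q^N\to Q$; its global transition function is $\Delta(c)(m)=\delta(n\mapsto c(m\triangleleft n))$. $\delta$ is $\bullet$-invariant if $\delta(g_0\bullet\ell)=\delta(\ell)$ for all $g_0\in G_0$, $\ell\in Q^N$, where $(g_0\bullet\ell)(n)=\ell(g_0^{-1}\cdot n)$. For $A\subseteq M$, $\pi_A\colon Q^M\to Q^A$ is restriction; $\mathrm{h}_{\mathcal{F}}(X)=\limsup_{i\in I}\frac{\log|\pi_{F_i}(X)|}{|F_i|}$ for $X\subseteq Q^M$. $\Delta$ is pre-injective if for all $c,c'\in Q^M$ such that $\{m: c(m)\neq c'(m)\}$ is finite and $\Delta(c)=\Delta(c')$ we have $c=c'$. *)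

(* Defs.v *)
From HB Require Import structures.
From mathcomp Require Import all_boot all_order all_algebra.
From mathcomp Require Import finmap.
From mathcomp Require Import boolp classical_sets cardinality reals ereal exp.
From mathcomp Require Import Rstruct.
From Stdlib Require Import Rdefinitions.
Set Implicit Arguments. Unset Strict Implicit. Unset Printing Implicit Defensive.
Import Order.TTheory GRing.Theory Num.Theory.
Local Open Scope classical_set_scope.
Local Open Scope ring_scope.

Record group := Group {
  gT :> Type;
  gmul : gT -> gT -> gT;
  gone : gT;
  ginv : gT -> gT;
  gmulA : forall x y z, gmul x (gmul y z) = gmul (gmul x y) z;
  gmul1 : forall x, gmul gone x = x;
  gmulV : forall x, gmul (ginv x) x = gone }.

(* M is taken to be a choiceType
   (harmless classically), so that finite subsets can be handled as {fset M}. *)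
Record cell_space := CellSpace {
  cs_G : group;
  cs_M : choiceType;
  cs_act : cs_G -> cs_M -> cs_M;
  cs_act1 : forall m, cs_act (gone cs_G) m = m;
  cs_actM : forall g h m, cs_act (gmul g h) m = cs_act g (cs_act h m);
  cs_trans : forall m m', exists g, cs_act g m = m';
  cs_m0 : cs_M;
  cs_coord : cs_M -> cs_G;
  cs_coordP : forall m, cs_act (cs_coord m) cs_m0 = m }.

Section CellSpaceDefs.
Variable S : cell_space.
Local Notation G := (cs_G S).
Local Notation M := (cs_M S).
Local Notation "g |> m" := (cs_act g m) (at level 40).

Definition stab : set G := [set g | g |> cs_m0 S = cs_m0 S].

(* left cosets g G_0, represented as subsets of G; G/G_0 is the set of these *)
Definition coset (g : G) : set G := [set x | exists2 g0, stab g0 & x = gmul g g0].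
Definition cosets : set (set G) := [set C | exists g, C = coset g].

(* a chosen representative of a coset (arbitrary for non-cosets) *)
Definition rep (C : set G) : G :=
  match pselect (exists g, C = coset g) with
  | left h => projT1 (cid h)
  | right _ => gone G
  end.

Definition semi_act (m : M) (C : set G) : M := (gmul (cs_coord m) (rep C)) |> cs_m0 S.

Definition right_amenable : Prop :=
  exists mu : set M -> R,
    (forall A, (0 <= mu A)%R) /\ mu setT = 1%R /\
    (forall A B, A `&` B = set0 -> mu (A `|` B) = (mu A + mu B)%R) /\
    (forall (g : G) (A : set M),
        (forall a b, A a -> A b ->
           semi_act a (coset g) = semi_act b (coset g) -> a = b) ->
        mu [set semi_act a (coset g) | a in A] = mu A).

Definition directed (I : Type) (le : I -> I -> Prop) : Prop :=
  (exists i : I, True) /\ (forall i, le i i) /\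
  (forall i j k, le i j -> le j k -> le i k) /\
  (forall i j, exists2 k, le i k & le j k).

Definition right_folner_net (I : Type) (le : I -> I -> Prop) (F : I -> {fset M}) : Prop :=
  directed le /\ (forall i, F i != fset0) /\
  forall g : G, forall eps : R, (0 < eps)%R -> exists i0, forall i, le i0 i ->
    (`| (#|` [fset m in F i | semi_act m (coset g) \notin F i]%fset |%:R
          / #|` F i |%:R) | < eps)%R.

Definition global_trans (Q : Type) (N : set (set G))
    (delta : ({n : set G | N n} -> Q) -> Q) (c : M -> Q) : M -> Q :=
  fun m => delta (fun n => c (semi_act m (proj1_sig n))).

(* bullet-invariance: delta (g0 . l) = delta l, where (g0 . l)(n) = l(g0^-1 . n);
   l' below is exactly g0 . l (g . C is the coset predicate x |-> C (g^-1 x)). *)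
Definition bullet_invariant (Q : Type) (N : set (set G))
    (delta : ({n : set G | N n} -> Q) -> Q) : Prop :=
  forall g0, stab g0 -> forall l l' : {n : set G | N n} -> Q,
    (forall n n' : {n : set G | N n},
        proj1_sig n' = (fun x => proj1_sig n (gmul (ginv g0) x)) -> l n = l' n') ->
    delta l' = delta l.

Definition pre_injective (Q : Type) (D : (M -> Q) -> (M -> Q)) : Prop :=
  forall c c' : M -> Q, finite_set [set m | c m <> c' m] -> D c = D c' -> c = c'.

Definition proj_set (Q : finType) (A : {fset M}) (X : set (M -> Q)) : {set {ffun A -> Q}} :=
  [set p | `[< exists2 c, X c & p = [ffun x : A => c (val x)] >] ].

Definition entropy (Q : finType) (I : Type) (le : I -> I -> Prop) (F : I -> {fset M})
    (X : set (M -> Q)) : \bar R :=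
  ereal_inf [set ereal_sup [set ((ln (#|proj_set (F j) X|%:R) / #|` F j|%:R)%R)%:E
                           | j in [set j | le i j]] | i in [set: I]].

End CellSpaceDefs.

(* Main.v *)
Require Import Defs.
From HB Require Import structures.
From mathcomp Require Import all_boot all_order all_algebra.
From mathcomp Require Import finmap.
From mathcomp Require Import boolp classical_sets cardinality reals ereal exp.
From mathcomp Require Import Rstruct.
From mathcomp Require Import zify ring lra.
From Stdlib Require Import Rdefinitions.
Local Open Scope classical_set_scope.
Set Implicit Arguments. Unset Strict Implicit. Unset Printing Implicit Defensive.
Section Alg.
Variable G : group.
Implicit Types x y z : G.
Lemma mulKg x y : gmul (ginv x) (gmul x y) = y.
Proof. by rewrite gmulA gmulV gmul1. Qed.
Lemma mulgV x : gmul x (ginv x) = gone G.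
Proof.
have h : gmul (ginv (ginv x)) (gmul (ginv x) (gmul x (ginv x))) = gone G.
  by rewrite [gmul (ginv x) _]mulKg gmulV.
by rewrite mulKg in h.
Qed.
Lemma mulg1 x : gmul x (gone G) = x.
Proof. have h := gmulV x. by rewrite -{1}h gmulA mulgV gmul1. Qed.
Lemma mulVKg x y : gmul x (gmul (ginv x) y) = y.
Proof. by rewrite gmulA mulgV gmul1. Qed.
Lemma mulgK x y : gmul (gmul y x) (ginv x) = y.
Proof. by rewrite -gmulA mulgV mulg1. Qed.
Lemma mulgKV x y : gmul (gmul y (ginv x)) x = y.
Proof. by rewrite -gmulA gmulV mulg1. Qed.
Lemma ginvK x : ginv (ginv x) = x.
Proof. by rewrite -{2}(mulKg (ginv x) x) gmulV mulg1. Qed.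
Lemma mulg_injl x y z : gmul x y = gmul x z -> y = z.
Proof. by move=> h; rewrite -(mulKg x y) h mulKg. Qed.
Lemma mulg_injr x y z : gmul y x = gmul z x -> y = z.
Proof. by move=> h; rewrite -(mulgK x y) h mulgK. Qed.
End Alg.
Section Cell.
Variable S : cell_space.
Local Notation G := (cs_G S).
Local Notation M := (cs_M S).
Local Notation act := (@cs_act S).
Local Notation m0 := (cs_m0 S).
Local Notation coord := (@cs_coord S).

Lemma actK (g : G) m : act (ginv g) (act g m) = m.
Proof. by rewrite -cs_actM gmulV cs_act1. Qed.
Lemma actVK (g : G) m : act g (act (ginv g) m) = m.
Proof. by rewrite -cs_actM mulgV cs_act1. Qed.
Lemma act_inj (g : G) m m' : act g m = act g m' -> m = m'.
Proof. by move=> h; rewrite -(actK g m) h actK. Qed.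
Lemma stab1 : @stab S (gone G).
Proof. by rewrite /stab /= cs_act1. Qed.
Lemma stabV (g : G) : @stab S g -> @stab S (ginv g).
Proof. by rewrite /stab /= => h; rewrite -{1}h actK. Qed.

Lemma rep_coset (r : G) : exists2 g0, @stab S g0 & rep (@coset S r) = gmul r g0.
Proof.
rewrite /rep; case: pselect => [h|h]; last by exfalso; apply: h; exists r.
case: (cid h) => r' /= E.
have : @coset S r' r' by exists (gone G); [exact: stab1 | rewrite mulg1].
by rewrite -E => -[g0 s0 ->]; exists g0.
Qed.

Lemma semi_coset m (r : G) : semi_act m (@coset S r) = act (coord m) (act r m0).
Proof.
case: (rep_coset r) => g0 s0 e; rewrite /semi_act e !cs_actM.
by rewrite s0.
Qed.

Definition lmul (g : G) (C : set G) : set G := fun x => C (gmul (ginv g) x).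

Lemma lmul_coset (g r : G) : lmul g (@coset S r) = @coset S (gmul g r).
Proof.
rewrite /lmul /coset; apply/funext => x /=; apply/propext; split.
  by case=> g0 s0 e; exists g0 => //; rewrite -gmulA -e mulVKg.
by case=> g0 s0 ->; exists g0 => //; rewrite -gmulA mulKg.
Qed.

Lemma semi_lmul m (g r : G) :
  semi_act m (lmul g (@coset S r)) = act (coord m) (act g (act r m0)).
Proof. by rewrite lmul_coset semi_coset cs_actM. Qed.

Definition g1 (h : G) (m : M) : G :=
  gmul (ginv (coord (act (ginv h) m))) (gmul (ginv h) (coord m)).

Lemma stab_g1 h m : @stab S (g1 h m).
Proof.
rewrite /stab /g1 /= !cs_actM cs_coordP.
by rewrite -{2}(cs_coordP (act (ginv h) m)) actK.
Qed.

Lemma semi_equiv h m r :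
  act (ginv h) (semi_act m (@coset S r)) =
  semi_act (act (ginv h) m) (lmul (g1 h m) (@coset S r)).
Proof.
by rewrite semi_coset semi_lmul /g1 !cs_actM actVK.
Qed.

Lemma gt_equiv (Q : Type) (N : set (set G)) (delta : ({n : set G | N n} -> Q) -> Q)
  (bi : bullet_invariant delta) (Nc : N `<=` @cosets S) (c : M -> Q) h m :
  global_trans delta (fun p => c (act (ginv h) p)) m =
  global_trans delta c (act (ginv h) m).
Proof.
rewrite /global_trans.
set m' := act (ginv h) m.
have -> : (fun n : {n : set G | N n} => c (act (ginv h) (semi_act m (proj1_sig n)))) =
   (fun n => c (semi_act m' (lmul (g1 h m) (proj1_sig n)))).
  apply/funext => -[n Nn] /=; case: (Nc _ Nn) => r ->.
  by rewrite semi_equiv.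
symmetry; apply: (bi (g1 h m)); first exact/stab_g1.
by move=> [n Nn] [n' Nn'] /= ->.
Qed.
End Cell.
Section Replace.
Variable S : cell_space.
Local Notation G := (cs_G S).
Local Notation M := (cs_M S).
Local Notation act := (@cs_act S).
Local Notation m0 := (cs_m0 S).
Local Notation coord := (@cs_coord S).

Definition pt (a : G) (n : set G) : M := act (gmul a (rep n)) m0.

Lemma pt_coset a r : pt a (@coset S r) = act (gmul a r) m0.
Proof. by case: (rep_coset r) => g0 s0 e; rewrite /pt e gmulA cs_actM s0. Qed.

Lemma semi_pt h m r :
  act (ginv h) (semi_act m (@coset S r)) =
  pt (gmul (coord (act (ginv h) m)) (g1 h m)) (@coset S r).
Proof. by rewrite semi_equiv semi_lmul pt_coset !cs_actM. Qed.

Lemma exE (D : set M) (N : set (set G)) :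
  finite_set D -> finite_set (@stab S) -> finite_set N ->
  exists E : {fset M}, (forall d, D d -> d \in E) /\
    (forall a n n2, N n -> D (pt a n) -> N n2 -> pt a n2 \in E).
Proof.
move=> fD fS fN.
pose f := fun (x : M * G * set G * set G) =>
  act (gmul (gmul (gmul (coord x.1.1.1) x.1.1.2) (ginv (rep x.1.2))) (rep x.2)) m0.
have fT : finite_set (D `|` f @` (D `*` @stab S `*` N `*` N)).
  by rewrite finite_setU; split => //; apply/finite_image/finite_setX => //;
     apply/finite_setX => //; apply/finite_setX.
exists (fset_set (D `|` f @` (D `*` @stab S `*` N `*` N))); split.
  by move=> d Dd; rewrite in_fset_set //; apply/mem_set; left.
move=> a n n2 Nn Dp Nn2; rewrite in_fset_set //; apply/mem_set; right.
set d := pt a n.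
exists (d, gmul (ginv (coord d)) (gmul a (rep n)), n, n2).
  split => //; split => //; split => //=.
  rewrite /stab /= cs_actM; rewrite -/(pt a n) -/d.
  by rewrite -{2}(cs_coordP d) actK.
by rewrite /f /= mulVKg mulgK.
Qed.
End Replace.
Section Replace2.
Variable S : cell_space.
Local Notation G := (cs_G S).
Local Notation M := (cs_M S).
Local Notation act := (@cs_act S).
Local Notation m0 := (cs_m0 S).
Local Notation coord := (@cs_coord S).
Variables (Q : Type) (N : set (set G)) (delta : ({n : set G | N n} -> Q) -> Q).
Variables (c c' : M -> Q) (E : {fset M}).

Definition inT (p m : M) := act (ginv (coord p)) m \in E.
Definition matches (x : M -> Q) (p : M) :=
  forall e, e \in E -> x (act (coord p) e) = c' e.

Lemma replace (bi : bullet_invariant delta) (Nc : N `<=` @cosets S)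
  (hcc : global_trans delta c = global_trans delta c') (d0 : M) (Dd0 : c d0 <> c' d0)
  (E1 : forall d, c d <> c' d -> d \in E)
  (E2 : forall a n n2, N n -> (fun m => c m <> c' m) (pt a n) -> N n2 -> pt a n2 \in E)
  (P : seq M)
  (disj : forall p q m, p \in P -> q \in P -> inT p m -> inT q m -> p = q)
  (x : M -> Q) :
  exists y, global_trans delta y = global_trans delta x /\
            forall p, p \in P -> ~ matches y p.
Proof.
pose sel m := exists p, p \in P /\ matches x p /\ c (act (ginv (coord p)) m) <> c' (act (ginv (coord p)) m).
pose y m := match pselect (sel m) with
  | left H => c (act (ginv (coord (proj1_sig (cid H)))) m) | right _ => x m end.
have Y1 : forall p m, p \in P -> matches x p -> inT p m -> y m = c (act (ginv (coord p)) m).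
  move=> p m Pp mp Tp; rewrite /y; case: pselect => [H|H].
    case: (cid H) => q /= [Pq [mq Dq]].
    by rewrite (disj q p m Pq Pp (E1 _ Dq) Tp).
  have := mp _ Tp; rewrite actVK => ->.
  case: (pselect (c (act (ginv (coord p)) m) = c' (act (ginv (coord p)) m))) => // h.
  by exfalso; apply: H; exists p.
have Y3 : forall p m, p \in P -> ~ matches x p -> inT p m -> y m = x m.
  move=> p m Pp mp Tp; rewrite /y; case: pselect => [H|H] //.
  case: (cid H) => q /= [Pq [mq Dq]].
  by rewrite (disj q p m Pq Pp (E1 _ Dq) Tp) in mq.
have Y2 : forall m, ~ sel m -> y m = x m.
  by move=> m H; rewrite /y; case: pselect.
exists y; split.
- apply/funext => m; rewrite /global_trans.
  case: (pselect (exists n, N n /\ sel (semi_act m n))) => [[n [Nn [p [Pp [mp Dp]]]]] | H].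
  + set h := coord p.
    have key : forall n2, N n2 -> inT p (semi_act m n2).
      move=> n2 Nn2; rewrite /inT; case: (Nc _ Nn2) => r2 e2; rewrite e2.
      case: (Nc _ Nn) => r e; rewrite e in Dp Nn; rewrite e2 in Nn2.
      rewrite semi_pt; rewrite semi_pt in Dp.
      exact: E2 Nn Dp Nn2.
    transitivity (delta (fun n => c (act (ginv h) (semi_act m (proj1_sig n))))).
      by congr delta; apply/funext => -[n2 Nn2] /=; exact: Y1 Pp mp (key _ Nn2).
    transitivity (delta (fun n => c' (act (ginv h) (semi_act m (proj1_sig n))))).
      have := gt_equiv bi Nc c h m; have := gt_equiv bi Nc c' h m.
      rewrite /global_trans => -> ->.
      exact: (congr1 (fun f => f (act (ginv h) m)) hcc).
    congr delta; apply/funext => -[n2 Nn2] /=.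
    by rewrite -(mp _ (key _ Nn2)) actVK.
  + congr delta; apply/funext => -[n Nn] /=; by apply: Y2 => hs; apply: H; exists n.
- move=> p Pp mpy; case: (pselect (matches x p)) => [mx|mx].
    have := mpy d0 (E1 _ Dd0).
    rewrite (Y1 p _ Pp mx) ?actK //.
    by rewrite /inT actK; exact: E1.
  apply: (mx) => e He; rewrite -(mpy e He) (Y3 p _ Pp mx) //.
  by rewrite /inT actK.
Qed.
End Replace2.
Section Count.
Variable S : cell_space.
Local Notation G := (cs_G S).
Local Notation M := (cs_M S).
Local Notation act := (@cs_act S).
Local Notation m0 := (cs_m0 S).
Local Notation coord := (@cs_coord S).
Variables (Q : finType) (q0 : Q) (W E : {fset M}) (c' : M -> Q).

Definition ext (p : {ffun W -> Q}) (m : M) : Q :=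
  if (insub m : option W) is Some w then p w else q0.

Lemma ext_val p (w : W) : ext p (val w) = p w.
Proof. by rewrite /ext valK. Qed.

Lemma ext_out p m : m \notin W -> ext p m = q0.
Proof. by move=> h; rewrite /ext insubF //; apply/negbTE. Qed.

Definition Sset (P : seq M) : {set {ffun W -> Q}} :=
  [set p | `[< forall t, t \in P -> ~ matches c' E (ext p) t >] ].
Definition Bset (t : M) : {set {ffun W -> Q}} :=
  [set p | `[< matches c' E (ext p) t >] ].

Lemma count_step (P : seq M) (t : M) : t \notin P ->
  (forall e, e \in E -> act (coord t) e \in W) ->
  (forall t' m, t' \in P -> inT E t m -> inT E t' m -> False) ->
  (#|Sset P| <= #|Sset P :&: Bset t| * expn #|Q| #|` E|)%N.
Proof.
move=> tP tW disj.
pose phi1 (p : {ffun W -> Q}) : {ffun W -> Q} :=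
  [ffun w : W => if act (ginv (coord t)) (val w) \in E
                 then c' (act (ginv (coord t)) (val w)) else p w].
pose psi (p : {ffun W -> Q}) : {ffun E -> Q} :=
  [ffun e : E => ext p (act (coord t) (val e))].
pose Phi p := (phi1 p, psi p).
have inj : injective Phi.
  move=> p p' [e1 e2]; apply/ffunP => w.
  case: (boolP (act (ginv (coord t)) (val w) \in E)) => hE.
    have := congr1 (fun f : {ffun E -> Q} => f (FSetSub hE)) e2; rewrite !ffunE /= actVK.
    by rewrite !ext_val.
  have := congr1 (fun f : {ffun W -> Q} => f w) e1; rewrite !ffunE.
  by rewrite (negbTE hE).
have ext_phi1 : forall p m, m \notin W -> ext (phi1 p) m = ext p m.
  by move=> p m hm; rewrite !ext_out.
have ext_phi2 : forall p m, m \in W -> act (ginv (coord t)) m \notin E ->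
    ext (phi1 p) m = ext p m.
  move=> p m hm hE; have -> : m = val (FSetSub hm) by [].
  by rewrite !ext_val ffunE /= (negbTE hE).
have sub : Phi @: Sset P \subset finset.setX (Sset P :&: Bset t) [set: {ffun E -> Q}]%SET.
  apply/fintype.subsetP => z /imsetP [p Sp ->]; rewrite finset.in_setX finset.in_setT andbT /= inE.
  apply/andP; split.
    rewrite inE; apply/asboolP => t' Pt' mt; move: Sp; rewrite inE => /asboolP Sp.
    apply: (Sp t' Pt') => e He; rewrite -(mt e He).
    case: (boolP (act (coord t') e \in W)) => hW; last by rewrite ext_phi1.
    rewrite ext_phi2 //; apply/negP => hT.
    by apply: (disj t' (act (coord t') e) Pt' hT); rewrite /inT actK.
  rewrite inE; apply/asboolP => e He.
  have hW := tW e He.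
  have -> : act (coord t) e = val (FSetSub hW) by [].
  by rewrite ext_val ffunE /= actK He.
have -> : #|Sset P| = #|Phi @: Sset P| by rewrite card_in_imset // => x y _ _; apply: inj.
apply: (leq_trans (subset_leq_card sub)); by rewrite cardsX cardsT card_ffun cardfE.
Qed.

Lemma count_all (P : seq M) : uniq P ->
  (forall t e, t \in P -> e \in E -> act (coord t) e \in W) ->
  (forall t t' m, t \in P -> t' \in P -> inT E t m -> inT E t' m -> t = t') ->
  (#|Sset P| * expn (expn #|Q| #|` E|) (size P) <=
     expn #|Q| #|` W| * expn (expn #|Q| #|` E| - 1) (size P))%N.
Proof.
elim: P => [|t P IH] /=.
  move=> _ _ _; rewrite !expn0 !muln1.
  have -> : Sset [::] = [set: {ffun W -> Q}]%SET by apply/setP => p; rewrite !inE; apply/asboolP.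
  by rewrite cardsT card_ffun cardfE.
move=> /andP [tP uP] tW disj.
have inP : forall z, z \in P -> z \in t :: P by move=> z h; rewrite inE h orbT.
have IH' := IH uP (fun t0 e h => tW t0 e (inP _ h))
  (fun a b m ha hb => disj a b m (inP _ ha) (inP _ hb)).
have dj : forall t' m, t' \in P -> inT E t m -> inT E t' m -> False.
  move=> t' m h h1 h2; have e := disj t t' m (mem_head _ _) (inP _ h) h1 h2.
  by rewrite e h in tP.
have st := count_step tP (fun e He => tW t e (mem_head _ _) He) dj.
set A := (expn #|Q| #|` E|)%N in st IH' *.
have split : (#|Sset (t :: P)| + #|Sset P :&: Bset t| = #|Sset P|)%N.
  rewrite -(cardsID (Bset t) (Sset P)) addnC; congr (_ + _)%N; apply: eq_card => p.
  rewrite !inE; apply/asboolP/andP.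
    move=> h; split; first by apply/asboolP => h'; apply: (h t (mem_head _ _)).
    by apply/asboolP => t' Pt'; apply: h; rewrite inE Pt' orbT.
  case=> /asboolP h1 /asboolP h2 t'; rewrite inE => /orP [/eqP ->|] //.
  exact: h2.
have h1 : (#|Sset (t :: P)| * A <= #|Sset P| * (A - 1))%N by nia.
rewrite /= !expnS.
set K := expn A (size P) in IH' *; set R := expn (A - 1) (size P) in IH' *.
set x := #|Sset (t :: P)| in h1 *; set z := #|Sset P| in h1 IH' *.
rewrite mulnA (leq_trans (leq_mul h1 (leqnn K))) //.
rewrite -mulnA mulnC -mulnA mulnCA.
by rewrite mulnCA [X in _ <= X]mulnCA leq_mul2l (mulnC K) IH' orbT.
Qed.
End Count.
Section Geom.
Variable S : cell_space.
Local Notation G := (cs_G S).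
Local Notation M := (cs_M S).
Local Notation act := (@cs_act S).
Local Notation m0 := (cs_m0 S).
Local Notation coord := (@cs_coord S).
Variable E : {fset M}.

Definition meet (p q : M) := exists m, inT E p m /\ inT E q m.

Lemma greedy (L : seq M) : (forall m, m \in L -> meet m m) ->
  exists P : seq M, [/\ uniq P, {subset P <= L},
    (forall p q, p \in P -> q \in P -> meet p q -> p = q) &
    (forall m, m \in L -> exists2 p, p \in P & meet m p)].
Proof.
elim: L => [|m L IH] refl.
  by exists [::]; split => //.
have r2 : forall z, z \in L -> meet z z by move=> z h; apply: refl; rewrite inE h orbT.
have [P [uP sP dP cP]] := IH r2.
case: (pselect (exists2 p, p \in P & meet m p)) => [H|H].
  exists P; split => //.
    by move=> z /sP h; rewrite inE h orbT.
  by move=> z; rewrite inE => /orP [/eqP ->|/cP].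
exists (m :: P); split.
- rewrite /= uP andbT; apply/negP => mP; apply: H; exists m => //.
  exact: refl (mem_head _ _).
- by move=> z; rewrite !inE => /orP [->|/sP ->] //; rewrite orbT.
- move=> p q; rewrite !inE => /orP [/eqP ->|Pp] /orP [/eqP ->|Pq] //.
  + by move=> mq; exfalso; apply: H; exists q.
  + by move=> [z [h1 h2]]; exfalso; apply: H; exists p => //; exists z.
  + exact: dP.
- move=> z; rewrite inE => /orP [/eqP ->|/cP [p Pp mp]].
    by exists m; [exact: mem_head | exact: refl (mem_head _ _)].
  by exists p => //; rewrite inE Pp orbT.
Qed.
End Geom.
Section Tiles.
Variable S : cell_space.
Local Notation G := (cs_G S).
Local Notation M := (cs_M S).
Local Notation act := (@cs_act S).
Local Notation m0 := (cs_m0 S).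
Local Notation coord := (@cs_coord S).
Variable E : {fset M}.
Variable s : seq {classic G}.
Hypothesis hs : forall g : G, @stab S g -> (g : {classic G}) \in s.

Lemma tile_bound (L P : seq M) : uniq L ->
  (forall m, m \in L -> exists2 p, p \in P & meet E m p) ->
  (size L <= size P * #|` E| * #|` E| * size s)%N.
Proof.
move=> uL cov.
pose Y := [seq (x, i) | x <- [seq (y, e2) | y <- [seq (p, e1) | p <- P, e1 <- enum_fset E],
                                            e2 <- enum_fset E], i <- iota 0 (size s)].
have sY : size Y = (size P * #|` E| * #|` E| * size s)%N by rewrite !size_allpairs size_iota.
pose good (m : M) (l : M * M * M * nat) :=
  act (coord m) l.1.1.2 = act (coord l.1.1.1) l.1.2 /\
  gmul (coord m) (coord l.1.1.2) =
  gmul (coord (act (coord l.1.1.1) l.1.2)) (nth (gone G : {classic G}) s l.2).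
have ex : forall m, m \in L -> exists l, good m l /\ l \in Y.
  move=> m mL; have [p Pp [y [h1 h2]]] := cov m mL.
  set e1 := act (ginv (coord m)) y; set e2 := act (ginv (coord p)) y.
  set g0 := gmul (ginv (coord y)) (gmul (coord m) (coord e1)).
  have s0 : @stab S g0.
    rewrite /stab /= /g0 !cs_actM cs_coordP /e1 (@actVK S (coord m) y).
    by rewrite -{2}(cs_coordP y) actK.
  have g0s := hs s0.
  exists (p, e1, e2, index (g0 : {classic G}) s); split.
    rewrite /good /= /e1 /e2 !actVK; split => //.
    by rewrite nth_index // /g0 mulVKg.
  apply: allpairs_f; last by rewrite mem_iota /= add0n index_mem.
  by apply: allpairs_f => //; apply: allpairs_f.
pose f m := match pselect (exists l, good m l /\ l \in Y) with
  | left H => proj1_sig (cid H) | right _ => (m0, m0, m0, 0%N) end.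
have fP : forall m, m \in L -> good m (f m) /\ f m \in Y.
  move=> m mL; rewrite /f; case: pselect => [H|H]; last by exfalso; apply: H; exact: ex.
  by case: (cid H).
rewrite -sY -(size_map f); apply: uniq_leq_size.
  rewrite map_inj_in_uniq // => m m' mL m'L e.
  have [[_ g1] _] := fP m mL; have [[_ g2] _] := fP m' m'L.
  rewrite e in g1; rewrite -g1 in g2.
  rewrite -(cs_coordP m) -(cs_coordP m').
  by rewrite (mulg_injr g2).
by move=> l /mapP [m mL ->]; case: (fP m mL).
Qed.
End Tiles.
Lemma count_cover (T T' : eqType) (s : seq T) (a : pred T) (bs : seq T') (b : T' -> pred T) :
  (forall x, ~~ a x -> has (fun e => b e x) bs) ->
  (count (predC a) s <= \sum_(e <- bs) count (b e) s)%N.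
Proof.
move=> H; elim: s => [|x s IH] /=; first by rewrite big1.
rewrite big_split /= leq_add //.
case: (boolP (a x)) => //= ax.
have := H x ax; elim: bs {H IH} => [|e bs IH'] //=.
rewrite big_cons; case: (b e x) => //= h.
Qed.

Lemma count_le_fset (T : choiceType) (F : {fset T}) (P : pred T) :
  (count P (enum_fset F) <= #|` [fset m in F | P m]%fset|)%N.
Proof.
rewrite -size_filter; apply: uniq_leq_size; first exact/filter_uniq/fset_uniq.
by move=> x; rewrite mem_filter !inE andbC.
Qed.

Lemma card_bigU (T : choiceType) (I : Type) (Bs : seq I) (B : I -> {fset T}) :
  (#|` (\bigcup_(f <- Bs) B f)%fset| <= \sum_(f <- Bs) #|` B f|)%N.
Proof.
elim: Bs => [|f Bs IH]; first by rewrite !big_nil cardfs0.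
rewrite !big_cons; apply: (leq_trans (leq_card_fsetU _ _).1).
by rewrite leq_add2l.
Qed.

Lemma card_W (T : choiceType) (I : Type) (F : {fset T}) (Bs : seq I) (g : I -> T -> T) :
  (#|` (F `|` \bigcup_(i <- Bs) [fset g i m | m in [fset m in F | g i m \notin F]])%fset|
    <= #|` F| + \sum_(i <- Bs) #|` [fset m in F | g i m \notin F]%fset|)%N.
Proof.
apply: (leq_trans (leq_card_fsetU _ _).1); rewrite leq_add2l.
apply: (leq_trans (card_bigU _ _)).
by apply: leq_sum => f _; apply: leq_imfset_card.
Qed.
Section PerF.
Variable S : cell_space.
Local Notation G := (cs_G S).
Local Notation M := (cs_M S).
Local Notation act := (@cs_act S).
Local Notation m0 := (cs_m0 S).
Local Notation coord := (@cs_coord S).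

Definition Wset (F : {fset M}) (sN : seq (set G)) : {fset M} :=
  (F `|` \bigcup_(n <- sN) [fset semi_act m n | m in [fset m in F | semi_act m n \notin F]])%fset.

Lemma perF (Q : finType) (q0 : Q) (N : set (set G)) (delta : ({n : set G | N n} -> Q) -> Q)
  (bi : bullet_invariant delta) (Nc : N `<=` @cosets S) (c c' : M -> Q)
  (hcc : global_trans delta c = global_trans delta c') (d0 : M) (Dd0 : c d0 <> c' d0)
  (E : {fset M})
  (E1 : forall d, c d <> c' d -> d \in E)
  (E2 : forall a n n2, N n -> (fun m => c m <> c' m) (pt a n) -> N n2 -> pt a n2 \in E)
  (s : seq {classic G}) (hs : forall g : G, @stab S g -> (g : {classic G}) \in s)
  (sN : seq (set G)) (hN : forall n, N n -> n \in sN) (F : {fset M}) :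
  exists k : nat,
  (#|proj_set F (range (global_trans delta))| * expn (expn #|Q| #|` E|) k <=
     expn #|Q| #|` Wset F sN| * expn (expn #|Q| #|` E| - 1) k)%N /\
  (#|` F| <= k * #|` E| * #|` E| * size s +
     \sum_(e <- enum_fset E) count (fun m => act (coord m) e \notin F) (enum_fset F))%N.
Proof.
pose L := [seq m <- enum_fset F | all (fun e => act (coord m) e \in F) (enum_fset E)].
have refl : forall m, m \in L -> meet E m m.
  move=> m _; exists (act (coord m) d0); rewrite /inT actK.
  by split; apply: E1.
have [P [uP sP dP cP]] := greedy refl.
exists (size P); split; last first.
  rewrite -(count_predC (fun m => all (fun e => act (coord m) e \in F) (enum_fset E))).
  apply: leq_add.
    rewrite -size_filter -/L; apply: tile_bound => //.
    exact/filter_uniq/fset_uniq.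
  apply: count_cover => x; rewrite -has_predC.
  by apply: sub_has => e /=.
have PL : forall t e, t \in P -> e \in E -> act (coord t) e \in F.
  move=> t e /sP; rewrite mem_filter => /andP [/allP h _] He.
  exact: h.
have tW : forall t e, t \in P -> e \in E -> act (coord t) e \in Wset F sN.
  by move=> t e tP He; rewrite /Wset in_fsetU PL.
have disj : forall t t' m, t \in P -> t' \in P -> inT E t m -> inT E t' m -> t = t'.
  by move=> t t' m tP t'P h1 h2; apply: dP => //; exists m.
have cnt := count_all q0 c' uP tW disj.
apply: leq_trans cnt; rewrite leq_mul2r; apply/orP; right.
pose g (p : {ffun Wset F sN -> Q}) : {ffun F -> Q} :=
  [ffun f : F => delta (fun n => ext q0 p (semi_act (val f) (proj1_sig n)))].
apply: (leq_trans _ (leq_imset_card g _)); apply: subset_leq_card.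
apply/fintype.subsetP => z; rewrite inE => /asboolP [c0 [x _ <-] ->].
have [y [ey ny]] := replace bi Nc hcc Dd0 E1 E2 disj x.
pose py : {ffun Wset F sN -> Q} := [ffun w => y (val w)].
have extpy : forall m, m \in Wset F sN -> ext q0 py m = y m.
  by move=> m hm; have -> : m = val (FSetSub hm) by []; rewrite ext_val ffunE.
apply/imsetP; exists py.
  rewrite inE; apply/asboolP => t tP mt; apply: (ny t tP) => e He.
  by rewrite -(mt e He) extpy // tW.
apply/ffunP => f; rewrite !ffunE -ey /global_trans; congr delta.
apply/funext => -[n Nn] /=; rewrite extpy //.
rewrite /Wset in_fsetU; case: (boolP (semi_act (val f) n \in F)) => //= hF.
apply/bigfcupP; exists n; first by rewrite hN.
by apply/imfsetP; exists (val f) => //; rewrite !inE hF (valP f).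
Qed.
End PerF.
Import Order.TTheory GRing.Theory Num.Theory.

Section Folner.
Variable S : cell_space.
Local Notation G := (cs_G S).
Local Notation M := (cs_M S).
Local Open Scope ring_scope.

Lemma folner_list (I : Type) (le : I -> I -> Prop) (F : I -> {fset M})
  (hF : right_folner_net le F) (gs : seq G) (eps : R) (he : 0 < eps) :
  exists i0, forall i, le i0 i -> forall g, List.In g gs ->
    (#|` [fset m in F i | semi_act m (@coset S g) \notin F i]%fset|%:R < eps * #|` F i|%:R).
Proof.
case: hF => [[[i0 _] [lerefl [letr ledir]]] [ne fol]].
elim: gs => [|g gs [i1 IH]]; first by exists i0.
have [i2 H2] := fol g eps (elimT RltP he).
have [k k1 k2] := ledir i1 i2.
exists k => i ki g' /= [<-|inG].
  have /RltP := H2 i (letr _ _ _ k2 ki); rewrite RdivE.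
  have Fp : (0 < #|` F i|%:R :> R).
    by rewrite ltr0n lt0n cardfs_eq0; exact: ne.
  by rewrite ger0_norm ?divr_ge0 // ltr_pdivrMr.
exact: IH (letr _ _ _ k1 ki) _ inG.
Qed.
End Folner.

Local Open Scope ring_scope.
Lemma final_ineq (lp n k W lq ka b a nN eps : R) :
  0 < n -> 0 <= lq -> 0 < ka -> 0 < b -> 0 <= k ->
  lp <= W * lq - k * ka ->
  n <= k * b + a * eps * n ->
  W <= n + nN * eps * n ->
  a * eps <= 1 / 2 -> nN * eps * lq <= ka / (4 * b) ->
  lp / n <= lq - ka / (4 * b).
Proof.
move=> n0 lq0 ka0 b0 k0 h1 h2 h3 h4 h5.
rewrite ler_pdivrMr //.
have e1 : W * lq <= (n + nN * eps * n) * lq by apply: ler_wpM2r.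
have e2 : a * eps * n <= 1 / 2 * n by apply: ler_wpM2r => //; exact: ltW.
have e3 : n / 2 <= k * b by lra.
have e4 : n / 2 * (ka / b) <= k * b * (ka / b).
  by apply: ler_wpM2r => //; apply: divr_ge0; exact: ltW.
have e5 : k * b * (ka / b) = k * ka by field; exact/lt0r_neq0.
have e6 : nN * eps * n * lq <= ka / (4 * b) * n.
  rewrite -mulrA (mulrC n) mulrA; apply: ler_wpM2r => //; exact: ltW.
have e7 : ka / (4 * b) = (ka / b) / 4 by field; exact/lt0r_neq0.
rewrite e7 in e6 *; rewrite e5 in e4.
set u := ka / b in e4 e6 *.
lra.
Qed.
Lemma sum_le_const (T : Type) (r : seq T) (f : T -> R) (c : R) :
  (forall i, List.In i r -> f i <= c) -> \sum_(i <- r) f i <= (size r)%:R * c.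
Proof.
elim: r => [|x r IH] h; first by rewrite big_nil mul0r.
rewrite big_cons /= mulrSr mulrDl mul1r addrC lerD //.
  by apply: IH => i hi; apply: h; right.
by apply: h; left.
Qed.

Lemma In_mem (T : eqType) (x : T) (s : seq T) : List.In x s -> x \in s.
Proof. by elim: s => [|y s IH] //= [->|h]; rewrite inE ?eqxx // IH ?orbT. Qed.
Lemma mem_In (T : eqType) (x : T) (s : seq T) : x \in s -> List.In x s.
Proof. by elim: s => [|y s IH] //=; rewrite inE => /orP [/eqP ->|/IH h]; [left|right]. Qed.
Lemma In_map' (T U : Type) (f : T -> U) x (s : seq T) : List.In x s -> List.In (f x) (map f s).
Proof. by elim: s => [|y s IH] //= [->|h]; [left|right; apply: IH]. Qed.
Lemma In_catl (T : Type) x (s t : seq T) : List.In x s -> List.In x (s ++ t).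
Proof. by elim: s => [|y s IH] //= [->|h]; [left|right; apply: IH]. Qed.
Lemma In_catr (T : Type) x (s t : seq T) : List.In x t -> List.In x (s ++ t).
Proof. by elim: s => [|y s IH] //= h; right; apply: IH. Qed.
Lemma coset_rep (S : cell_space) (C : set (cs_G S)) :
  (exists g, C = @coset S g) -> C = @coset S (rep C).
Proof. by rewrite /rep; case: pselect => [h|h] H //; exact: (proj2_sig (cid h)). Qed.

Lemma lin1 (x y z w v : R) : x + y * z <= w + y * v -> x <= w - y * (z - v).
Proof. move=> h; lra. Qed.

Lemma main_aux (S : cell_space) (Q : finType) (N : set (set (cs_G S)))
  (delta : ({n : set (cs_G S) | N n} -> Q) -> Q)
  (I : Type) (le : I -> I -> Prop) (F : I -> {fset cs_M S})
  (Nc : N `<=` @cosets S) (hF : right_folner_net le F) (bi : bullet_invariant delta)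
  (Q2 : (1 < #|Q|)%nat) (c c' : cs_M S -> Q)
  (hcc : global_trans delta c = global_trans delta c') (d0 : cs_M S) (Dd0 : c d0 <> c' d0)
  (E : {fset cs_M S})
  (E1 : forall d, c d <> c' d -> d \in E)
  (E2 : forall a n n2, N n -> (fun m => c m <> c' m) (pt a n) -> N n2 -> pt a n2 \in E)
  (s : seq {classic (cs_G S)}) (hs : forall g : cs_G S, @stab S g -> (g : {classic (cs_G S)}) \in s)
  (sN : seq (set (cs_G S))) (hN : forall n, N n -> n \in sN) (hN2 : forall n, n \in sN -> N n) :
  (entropy le F (range (global_trans delta)) < (ln (#|Q|%:R : R))%:E)%E.
Proof.
set q := #|Q|; set a := #|` E|; set ns := size s; set nN := size sN.
have a1 : (0 < a)%nat by rewrite /a cardfs_gt0; apply/fset0Pn; exists d0; exact: E1.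
have ns1 : (0 < ns)%nat.
  have := hs _ (@stab1 S); rewrite /ns; by case: (s).
set b := (a * a * ns)%nat.
have b1 : (0 < b)%nat by rewrite /b !muln_gt0 a1 ns1.
set A := expn q a.
have A2 : (2 <= A)%nat.
  apply: (leq_trans Q2); rewrite /A.
  have := @leq_pexp2l q 1 a (ltnW Q2) a1; by rewrite expn1.
set ka := ln (A%:R : R) - ln ((A - 1)%:R).
have ka0 : 0 < ka.
  have hA1 : (0 < A - 1)%nat by lia.
  have hA0 : (0 < A)%nat by lia.
  rewrite subr_gt0 ltr_ln ?posrE ?ltr0n // ltr_nat; lia.
set lq := ln (q%:R : R).
have lq0 : 0 <= lq by apply: ln_ge0; rewrite ler1n; lia.
set bR := (b%:R : R).
have bR0 : 0 < bR by rewrite ltr0n.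
set eps := Num.min (1 / (2 * a%:R)) (ka / (4 * bR) / ((nN%:R + 1) * (lq + 1))).
have a0R : (0 < a%:R :> R) by rewrite ltr0n.
have nN0 : (0 <= nN%:R :> R) by rewrite ler0n.
have p0 : 0 < (nN%:R + 1) * (lq + 1) by rewrite mulr_gt0 //; lra.
have eps0 : 0 < eps.
  rewrite lt_min; apply/andP; split; first by rewrite divr_gt0 // mulr_gt0.
  by apply: divr_gt0 => //; apply: divr_gt0 => //; apply: mulr_gt0.
have aeps : a%:R * eps <= 1 / 2.
  have : eps <= 1 / (2 * a%:R) by rewrite ge_min lexx.
  move=> h; apply: (le_trans (ler_wpM2l (ltW a0R) h)).
  by rewrite le_eqVlt; apply/orP; left; apply/eqP; field; apply/lt0r_neq0.
have neps : nN%:R * eps * lq <= ka / (4 * bR).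
  have h : eps <= ka / (4 * bR) / ((nN%:R + 1) * (lq + 1)) by rewrite ge_min lexx orbT.
  rewrite ler_pdivlMr // in h.
  apply: le_trans h; nra.
pose gs := map (fun e => @cs_coord S e) (enum_fset E) ++ map (fun n => rep n) sN.
have [i0 Hi0] := folner_list hF gs eps0.
have kb0 : 0 < ka / (4 * bR) by apply: divr_gt0 => //; apply: mulr_gt0.
rewrite /entropy.
apply: (@le_lt_trans _ _ (ereal_sup [set ((ln (#|proj_set (F j) (range (global_trans delta))|%:R) / #|` F j|%:R))%:E | j in [set j | le i0 j]])).
  by apply: ereal_inf_lbound; exists i0.
apply: (@le_lt_trans _ _ (lq - ka / (4 * bR))%:E); last by rewrite lte_fin; lra.
apply: ge_ereal_sup => _ [j hj <-]; rewrite lee_fin.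
have [k [h1 h2]] := perF (c d0) bi Nc hcc Dd0 E1 E2 hs hN (F j).
have Hj := Hi0 j hj.
set n := #|` F j|.
have n0 : (0 < n%:R :> R).
  case: hF => _ [ne _]; by rewrite ltr0n lt0n cardfs_eq0; exact: ne.
set P := #|proj_set (F j) (range (global_trans delta))|.
have P0 : (0 < P)%nat.
  apply/card_gt0P; exists [ffun f : F j => global_trans delta c (val f)].
  by rewrite inE; apply/asboolP; exists (global_trans delta c) => //; exists c.
set W := #|` Wset (F j) sN|.
have hlp : ln (P%:R) <= W%:R * lq - k%:R * ka.
  have hR : (P%:R : R) * A%:R ^+ k <= q%:R ^+ W * (A - 1)%:R ^+ k.
    by rewrite -!natrX -!natrM ler_nat.
  have A0 : (0 < A%:R :> R) by rewrite ltr0n (leq_trans _ A2).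
  have A10 : (0 < (A - 1)%:R :> R) by rewrite ltr0n subn_gt0.
  have q0 : (0 < q%:R :> R) by rewrite ltr0n (ltnW Q2).
  have P0R : (0 < P%:R :> R) by rewrite ltr0n.
  have hL : ln ((P%:R : R) * A%:R ^+ k) <= ln (q%:R ^+ W * (A - 1)%:R ^+ k).
    by rewrite ler_ln // posrE mulr_gt0 // exprn_gt0.
  have e1 : ln ((P%:R : R) * A%:R ^+ k) = ln P%:R + k%:R * ln A%:R.
    rewrite lnM; last by rewrite posrE exprn_gt0.
      by rewrite lnXn // mulr_natl.
    by rewrite posrE.
  have e2 : ln ((q%:R : R) ^+ W * (A - 1)%:R ^+ k) = W%:R * lq + k%:R * ln (A - 1)%:R.
    rewrite lnM; last by rewrite posrE exprn_gt0.
      by rewrite !lnXn // !mulr_natl.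
    by rewrite posrE exprn_gt0.
  rewrite e1 e2 in hL.
  exact: lin1 hL.
have hn : n%:R <= k%:R * bR + a%:R * eps * n%:R.
  have h2R : (n%:R : R) <= (k * a * a * ns)%:R +
      \sum_(e <- enum_fset E) (count (fun m => cs_act (cs_coord m) e \notin F j) (enum_fset (F j)))%:R.
    by rewrite -natr_sum -natrD ler_nat.
  apply: (le_trans h2R); rewrite /bR /b !natrM !mulrA lerD2l.
  have -> : a%:R * eps * n%:R = (size (enum_fset E))%:R * (eps * n%:R) by rewrite mulrA.
  apply: sum_le_const => e /In_mem He.
  have -> : count (fun m => cs_act (cs_coord m) e \notin F j) (enum_fset (F j)) =
            count (fun m => semi_act m (@coset S (@cs_coord S e)) \notin F j) (enum_fset (F j)).
    by apply: eq_count => m; rewrite semi_coset cs_coordP.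
  apply: ltW; apply: le_lt_trans (Hj _ _); first by rewrite ler_nat; apply: count_le_fset.
  by apply: In_catl; apply: In_map'; apply: mem_In.
have hW : W%:R <= n%:R + nN%:R * eps * n%:R.
  have h3 := card_W (F j) sN (fun n m => semi_act m n).
  have h3R : (W%:R : R) <= n%:R + \sum_(n' <- sN) (#|` [fset m in F j | semi_act m n' \notin F j]%fset|)%:R.
    by rewrite -natr_sum -natrD ler_nat.
  apply: (le_trans h3R); rewrite lerD2l -mulrA.
  apply: sum_le_const => n' /In_mem Hn'.
  have e := coset_rep (Nc _ (hN2 _ Hn')); rewrite e.
  apply: ltW; apply: Hj.
  by apply: In_catr; apply: In_map'; apply: mem_In.

apply: (final_ineq n0 lq0 ka0 bR0 _ hlp hn hW aeps neps).
by rewrite ler0n.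
Qed.
Local Close Scope ring_scope.

Theorem theorem6 (S : cell_space) (Q : finType) (N : set (set (cs_G S)))
    (delta : ({n : set (cs_G S) | N n} -> Q) -> Q)
    (I : Type) (le : I -> I -> Prop) (F : I -> {fset cs_M S}) :
  right_amenable S ->
  finite_set (@stab S) ->
  N `<=` @cosets S ->
  (forall g0 g, @stab S g0 -> N (coset g) -> N (coset (gmul g0 g))) ->
  finite_set N ->
  right_folner_net le F ->
  bullet_invariant delta ->
  (1 < #|Q|)%N ->
  ~ pre_injective (global_trans delta) ->
  (entropy le F (range (global_trans delta)) < (ln (#|Q|%:R : R))%:E)%E.
Proof.
move=> _ fS Nc _ fN hF bi Q2 npi.
have [c [c' [fD [hcc ncc]]]] : exists c c' : cs_M S -> Q,
    finite_set [set m | c m <> c' m] /\ global_trans delta c = global_trans delta c' /\ c <> c'.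
  case: (pselect (exists c c' : cs_M S -> Q, finite_set [set m | c m <> c' m] /\
     global_trans delta c = global_trans delta c' /\ c <> c')) => // H.
  exfalso; apply: npi => c c' f e; case: (pselect (c = c')) => // ne.
  by exfalso; apply: H; exists c, c'.
have [d0 Dd0] : exists d0, c d0 <> c' d0.
  case: (pselect (exists d0, c d0 <> c' d0)) => // H; exfalso; apply: ncc.
  apply/funext => m; case: (pselect (c m = c' m)) => // h.
  by exfalso; apply: H; exists m.
have [E [E1 E2]] := exE fD fS fN.
have [s hs'] := (finite_seqP (T := {classic (cs_G S)}) (@stab S)).1 fS.
have hs : forall g : cs_G S, @stab S g -> (g : {classic (cs_G S)}) \in s.
  by move=> g sg; have : [set` s] g by rewrite -hs'.
have [sN hN'] := (finite_seqP (T := set (cs_G S)) N).1 fN.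
have hN : forall n, N n -> n \in sN by move=> n Nn; have : [set` sN] n by rewrite -hN'.
have hN2 : forall n, n \in sN -> N n by move=> n nN; rewrite hN'.
exact: (main_aux Nc hF bi Q2 hcc Dd0 E1 E2 hs hN hN2).
Qed.
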